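(* Let $D$ be a strongly connected digraph with $n$ vertices and exactly three complementarity eigenvalues. If $D$ contains a subdigraph isomorphic to the $\theta$-digraph $\theta(a,b,c)$, then $n=a+b+c+2$.
   Context: All digraphs are finite, without loops and without multiple arcs. For a digraph $D$ with adjacency matrix $A$ (on $n$ vertices), a real $\lambda$ is a complementarity eigenvalue if there is a nonzero $x\in\mathbb{R}^n$, $x\ge0$, with $Ax-\lambda x\ge 0$ and $\langle x,Ax-\lambda x\rangle=0$. Subdigraphs need not be induced. The $\theta$-digraph $\theta(a,b,c)$ (integers $a,b,c\ge0$, $a\le b$, $b>0$) consists of two distinct vertices $v,w$ and three internally vertex-disjoint directed paths: two from $w$ to $v$ having $a+2$ and $b+2$ vertices, and one from $v$ to $w$ having $c+2$ vertices. *)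

(* Defs.v *)
From HB Require Import structures.
From mathcomp Require Import all_boot all_order all_algebra.
From mathcomp Require Import reals.
Set Implicit Arguments. Unset Strict Implicit. Unset Printing Implicit Defensive.
Import Order.TTheory GRing.Theory Num.Theory.
Local Open Scope ring_scope.

(* A digraph on vertex set 'I_n is an arc relation E : rel 'I_n
   (no multiple arcs by construction; loops excluded by [irreflexive E]). *)

Definition adjmx (R : realType) (n : nat) (E : rel 'I_n) : 'M[R]_n :=
  \matrix_(i, j) (E i j)%:R.

Definition compl_eigenvalue (R : realType) (n : nat) (A : 'M[R]_n) (lam : R) : Prop :=
  exists x : 'cV[R]_n,
    [/\ x != 0,
        forall i, 0 <= x i 0,
        forall i, 0 <= (A *m x - lam *: x) i 0
      & \sum_i x i 0 * (A *m x - lam *: x) i 0 = 0].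

Definition exactly_three_CE (R : realType) (n : nat) (A : 'M[R]_n) : Prop :=
  exists l1 l2 l3 : R,
    [/\ l1 != l2, l1 != l3, l2 != l3 &
        forall lam, compl_eigenvalue A lam <-> (lam = l1 \/ lam = l2 \/ lam = l3)].

Definition strongly_connected (n : nat) (E : rel 'I_n) : Prop :=
  forall u v, connect E u v.

(* The theta digraph theta(a,b,c) on vertex set {0, ..., a+b+c+1}:
   v = 0, w = 1; the three internally disjoint directed paths are
   w -> 2 -> ... -> a+1 -> v                    (a+2 vertices),
   w -> a+2 -> ... -> a+b+1 -> v                (b+2 vertices),
   v -> a+b+2 -> ... -> a+b+c+1 -> w            (c+2 vertices). *)
Definition theta_paths (a b c : nat) : seq (seq nat) :=
  [:: 1 :: rcons (iota 2 a) 0;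
      1 :: rcons (iota (a + 2) b) 0;
      0 :: rcons (iota (a + b + 2) c) 1].

Definition theta_arc (a b c : nat) (x y : nat) : bool :=
  has (fun p : seq nat => (x, y) \in zip p (behead p)) (theta_paths a b c).

(* D = (n, E) contains a (not necessarily induced) subdigraph isomorphic to
   theta(a,b,c): an injective vertex map sending arcs of theta to arcs of D. *)
Definition contains_theta (n : nat) (E : rel 'I_n) (a b c : nat) : Prop :=
  exists f : 'I_(a + b + c + 2) -> 'I_n,
    injective f /\
    forall x y : 'I_(a + b + c + 2), theta_arc a b c x y -> E (f x) (f y).

(* Main.v *)
Require Import Defs.
From HB Require Import structures.
From mathcomp Require Import all_boot all_order all_algebra.
From mathcomp Require Import reals.
From mathcomp Require Import ring lra zify.
Set Implicit Arguments. Unset Strict Implicit. Unset Printing Implicit Defensive.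
Import Order.TTheory GRing.Theory Num.Theory.

Lemma path_of_zip (e : rel nat) x q :
  (forall u v, (u, v) \in zip (x :: q) q -> e u v) -> path e x q.
Proof.
elim: q x => [//|y q IH] x h /=; apply/andP; split.
  by apply: h; rewrite /= inE eqxx.
by apply: IH => u v huv; apply: h; rewrite /= inE huv orbT.
Qed.

Lemma last_iotaS m k x : last x (iota m k.+1) = (m + k)%N.
Proof. by rewrite -addn1 iotaD /= cats1 last_rcons. Qed.

Lemma ctrans (T : finType) (e : rel T) x y z : connect e x y -> connect e y z -> connect e x z.
Proof. move=> h1 h2; exact: (@connect_trans T e y x z h1 h2). Qed.

Section Comb.
Variables (n a b c : nat) (E : rel 'I_n) (f : 'I_(a + b + c + 2) -> 'I_n).
Hypotheses (finj : injective f)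
  (farc : forall x y : 'I_(a + b + c + 2), theta_arc a b c x y -> E (f x) (f y)).

Let N := (a + b + c + 2)%N.
Let o0 : 'I_N := Ordinal (ltn_addl (a + b + c) (isT : (0 < 2)%N)).
Definition tord k : 'I_(a + b + c + 2) := insubd o0 k.
Lemma tordK k : (k < a + b + c + 2)%N -> tord k = k :> nat.
Proof. by move=> h; rewrite val_insubd h. Qed.
Lemma tord_val (k : 'I_(a + b + c + 2)) : tord k = k.
Proof. by apply: val_inj => /=; rewrite tordK. Qed.
Definition g k := f (tord k).

Lemma g_inj k l : (k < N)%N -> (l < N)%N -> g k = g l -> k = l.
Proof. by move=> hk hl /finj /(congr1 (@nat_of_ord _)); rewrite !tordK. Qed.

Definition relS (S : {set 'I_n}) := [rel x y | E x y && (x \in S) && (y \in S)].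

Lemma arc u v : theta_arc a b c u v -> (u < N)%N -> (v < N)%N -> E (g u) (g v).
Proof. by move=> h hu hv; apply: farc; rewrite !tordK. Qed.

Definition p1 := rcons (iota 2 a) 0.
Definition p2 := rcons (iota (a + 2) b) 0.
Definition p3 := rcons (iota (a + b + 2) c) 1.

Lemma path1 : path (theta_arc a b c) 1 p1.
Proof. apply: path_of_zip => u v h; apply/hasP; exists (1 :: p1) => //; by rewrite inE eqxx. Qed.
Lemma path2 : path (theta_arc a b c) 1 p2.
Proof. apply: path_of_zip => u v h; apply/hasP; exists (1 :: p2) => //; by rewrite !inE eqxx orbT. Qed.
Lemma path3 : path (theta_arc a b c) 0 p3.
Proof. apply: path_of_zip => u v h; apply/hasP; exists (0 :: p3) => //; by rewrite !inE eqxx !orbT. Qed.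

Lemma mem1 y : y \in 1 :: p1 -> (y < a + 2)%N.
Proof. by rewrite /p1 inE mem_rcons !inE mem_iota; lia. Qed.
Lemma mem2 y : y \in 1 :: p2 -> (y < a + b + 2)%N.
Proof. by rewrite /p2 inE mem_rcons !inE mem_iota; lia. Qed.
Lemma mem3 y : y \in 0 :: p3 -> (y < 2)%N || (a + b + 2 <= y < N)%N.
Proof. by rewrite /p3 inE mem_rcons !inE mem_iota /N; lia. Qed.

Lemma reach (S : {set 'I_n}) (K : pred nat) x q : path (theta_arc a b c) x q ->
  (forall y, y \in x :: q -> (y < N)%N && K y) ->
  (forall k, (k < N)%N -> K k -> g k \in S) ->
  forall y, y \in x :: q -> connect (relS S) (g x) (g y) /\ connect (relS S) (g y) (g (last x q)).
Proof.
move=> + hK hS; elim: q x hK => [|z q IH] x hK /= pth y.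
  by rewrite inE => /eqP ->; rewrite connect0.
case/andP: pth => axz pz.
have hx := hK x (mem_head _ _); have hz := hK z ltac:(by rewrite !inE eqxx orbT).
case/andP: hx => hx Kx; case/andP: hz => hz Kz.
have exz : relS S (g x) (g z) by rewrite /= arc // !hS.
have IH' := IH z (fun y hy => hK y ltac:(by rewrite inE hy orbT)) pz.
rewrite inE => /orP [/eqP ->|hy].
  split; first by rewrite connect0.
  by apply: ctrans (@connect1 _ (relS S) _ _ exz) (proj2 (IH' z (mem_head _ _))).
have [h1 h2] := IH' y hy; split => //.
exact: ctrans (@connect1 _ (relS S) _ _ exz) h1.
Qed.

Definition SK (K : pred nat) := [set f k | k in [set k : 'I_N | K k]].

Lemma gSK (K : pred nat) k : (k < N)%N -> K k -> g k \in SK K.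
Proof. by move=> hk hK; apply/imsetP; exists (tord k) => //; rewrite inE tordK. Qed.

Lemma SK_inv (K : pred nat) i : i \in SK K -> exists k : 'I_N, [/\ K k, i = g k & (k < N)%N].
Proof. by case/imsetP => k; rewrite inE => hk ->; exists k; rewrite /g tord_val. Qed.

Lemma strong_SK (K : pred nat) :
  K 0 -> K 1 -> (forall y, y \in 1 :: p1 -> K y) -> (forall y, y \in 0 :: p3 -> K y) ->
  (forall k, (k < N)%N -> K k -> [|| k \in 1 :: p1, k \in 0 :: p3 | (k \in 1 :: p2) && all K (1 :: p2)]) ->
  forall i j, i \in SK K -> j \in SK K -> connect (relS (SK K)) i j.
Proof.
move=> K0 K1 Kp1 Kp3 cover.
have hS : forall k, (k < N)%N -> K k -> g k \in SK K by move=> k; exact: gSK.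
have R1 := reach path1 (K := K) (fun y hy => ltac:(rewrite Kp1 // andbT; have := mem1 hy; rewrite /N; lia)) hS.
have R3 := reach path3 (K := K) (fun y hy => ltac:(rewrite Kp3 // andbT; have := mem3 hy; rewrite /N; lia)) hS.
have l1 : last 1 p1 = 0 by rewrite /p1 last_rcons.
have l2 : last 1 p2 = 0 by rewrite /p2 last_rcons.
have l3 : last 0 p3 = 1 by rewrite /p3 last_rcons.
have c10 : connect (relS (SK K)) (g 1) (g 0) by have := proj2 (R1 1 (mem_head _ _)); rewrite l1.
have c01 : connect (relS (SK K)) (g 0) (g 1) by have := proj2 (R3 0 (mem_head _ _)); rewrite l3.
have hub : forall i, i \in SK K -> connect (relS (SK K)) i (g 1) /\ connect (relS (SK K)) (g 1) i.
  move=> i /SK_inv [k [Kk -> hk]].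
  case/or3P: (cover _ hk Kk) => [m1|m3|/andP [m2 a2]].
  - have [h1 h2] := R1 _ m1; rewrite l1 in h2; split => //.
    exact: ctrans h2 c01.
  - have [h1 h2] := R3 _ m3; rewrite l3 in h2; split => //.
    exact: ctrans c10 h1.
  - have R2 := reach path2 (K := K) (fun y hy => ltac:(rewrite (allP a2 _ hy) andbT; have := mem2 hy; rewrite /N; lia)) hS.
    have [h1 h2] := R2 _ m2; rewrite l2 in h2; split => //.
    exact: ctrans h2 c01.
move=> i j /hub [hi _] /hub [_ hj]; exact: ctrans hi hj.
Qed.

End Comb.

Definition K1 a b k := (k < a + 2) || (a + b + 2 <= k).
Lemma K1_0 a b : K1 a b 0. Proof. by rewrite /K1; lia. Qed.
Lemma K1_1 a b : K1 a b 1. Proof. by rewrite /K1; lia. Qed.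
Lemma K1_p1 a b y : y \in 1 :: p1 a -> K1 a b y.
Proof. by move=> h; have := @mem1 a 0 0 _ h; rewrite /K1; lia. Qed.
Lemma K1_p3 a b c y : y \in 0 :: p3 a b c -> K1 a b y.
Proof. by move=> h; have := mem3 h; rewrite /K1; lia. Qed.
Lemma cov1 a b c k : k < a + b + c + 2 -> K1 a b k ->
  [|| k \in 1 :: p1 a, k \in 0 :: p3 a b c | (k \in 1 :: p2 a b) && all (K1 a b) (1 :: p2 a b)].
Proof.
move=> hk Kk; have : (k \in 1 :: p1 a) || (k \in 0 :: p3 a b c).
  by move: Kk; rewrite /K1 /p1 /p3 !inE !mem_rcons !inE !mem_iota; lia.
by case/orP => ->; rewrite ?orbT.
Qed.
Lemma cov2 a b c k : k < a + b + c + 2 -> predT k ->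
  [|| k \in 1 :: p1 a, k \in 0 :: p3 a b c | (k \in 1 :: p2 a b) && all predT (1 :: p2 a b)].
Proof.
move=> hk _; rewrite all_predT andbT.
by rewrite /p1 /p2 /p3 !inE !mem_rcons !inE !mem_iota; lia.
Qed.
Lemma lt0N a b c : 0 < a + b + c + 2. Proof. lia. Qed.
Lemma lt1N a b c : 1 < a + b + c + 2. Proof. lia. Qed.

Lemma pfacts a b c : let p := last 0 (iota (a + b + 2) c) in
  [/\ p < a + b + c + 2, K1 a b p, p != 1 & theta_arc a b c p 1].
Proof.
move=> p.
have pmem : p \in 0 :: iota (a + b + 2) c by apply: mem_last.
move: pmem; rewrite inE mem_iota => hp.
split; [ lia | rewrite /K1; lia | apply/eqP; lia | ].
by move: (path3 a b c); rewrite /p3 rcons_path => /andP [_].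
Qed.

Lemma qfacts a b c : 0 < b -> let q := last 1 (iota (a + 2) b) in
  [/\ q < a + b + c + 2, ~~ K1 a b q & theta_arc a b c q 0].
Proof.
move=> b0 q.
have qE : q = a + b + 1.
  have hb : b = (b - 1).+1 by lia.
  by rewrite /q [in iota _ b]hb last_iotaS; lia.
split; [rewrite qE; lia | rewrite qE /K1; lia | ].
by move: (path2 a b c); rewrite /p2 rcons_path => /andP [_].
Qed.

Lemma four_in_three (R : realType) (l1 l2 l3 x0 x1 x2 x3 : R) :
  (x0 < x1)%R -> (x1 < x2)%R -> (x2 < x3)%R ->
  (x0 = l1 \/ x0 = l2 \/ x0 = l3) -> (x1 = l1 \/ x1 = l2 \/ x1 = l3) ->
  (x2 = l1 \/ x2 = l2 \/ x2 = l3) -> (x3 = l1 \/ x3 = l2 \/ x3 = l3) -> False.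
Proof.
move=> h01 h12 h23.
by case=> [e0|[e0|e0]]; case=> [e1|[e1|e1]]; case=> [e2|[e2|e2]]; case=> [e3|[e3|e3]]; lra.
Qed.

Local Open Scope ring_scope.
Section PF.
Variable R : realType.

Lemma fin_argmax (T : finType) (F : T -> R) (i0 : T) : exists k, forall i, F i <= F k.
Proof.
case: (@arg_maxP _ R T i0 xpredT F isT) => k _ Hk; exists k => i; exact: Hk.
Qed.

Lemma mono_lem m (B : 'M[R]_m) (x z : 'cV[R]_m) t :
  (forall i j, 0 <= B i j) -> (forall i, 0 < x i 0) ->
  (forall i, (B *m x) i 0 < t * x i 0) ->
  (forall i, 0 <= t * z i 0 - (B *m z) i 0) -> forall i, 0 <= z i 0.
Proof.
move=> B0 x0 Bx Hz i.
case: m B x z B0 x0 Bx Hz i => [|m] B x z B0 x0 Bx Hz i; first by case: i.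
have [k Hk] := fin_argmax (fun i => - z i 0 / x i 0) ord0.
rewrite leNgt; apply/negP => zi.
set tau := - z k 0 / x k 0.
have xk := x0 k.
have tpos : 0 < tau.
  apply: (lt_le_trans _ (Hk i)); rewrite divr_gt0 ?x0 //; lra.
have wge : forall j, 0 <= z j 0 + tau * x j 0.
  move=> j; have := Hk j; rewrite -/tau => h.
  have xj := x0 j.
  rewrite ler_pdivrMr // in h; lra.
have wk : z k 0 + tau * x k 0 = 0.
  rewrite /tau divfK ?gt_eqF //; lra.
have := Hz k; have := Bx k.
have : 0 <= \sum_j B k j * (z j 0 + tau * x j 0).
  by apply: sumr_ge0 => j _; apply: mulr_ge0.
rewrite !mxE => h1 h2 h3.
have e2 : \sum_j B k j * (z j 0 + tau * x j 0) =
   \sum_j B k j * z j 0 + tau * \sum_j B k j * x j 0.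
  rewrite mulr_sumr -big_split /=; apply: eq_bigr => j _; ring.
rewrite e2 in h1.
have h4 : tau * \sum_j B k j * x j 0 < tau * (t * x k 0) by rewrite ltr_pM2l.
have h5 : t * z k 0 + tau * (t * x k 0) = 0.
  by rewrite mulrCA -mulrDr wk mulr0.
lra.
Qed.
Lemma evalCP m (A : 'M[R]_m) t : map_mx (horner_eval t) (char_poly_mx A) = t%:M - A.
Proof.
apply/matrixP => i j; rewrite !mxE horner_evalE hornerD hornerN hornerMn hornerX hornerC.
by [].
Qed.

Lemma det_eval m (A : 'M[R]_m) t : (\det (char_poly_mx A)).[t] = \det (t%:M - A).
Proof. by rewrite -horner_evalE -det_map_mx evalCP. Qed.

Lemma adj_eval m (A : 'M[R]_m) t i j : ((\adj (char_poly_mx A)) i j).[t] = (\adj (t%:M - A)) i j.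
Proof.
have := congr1 (fun M : 'M[R]_m => M i j) (@map_mx_adj _ _ (horner_eval t) m (char_poly_mx A)).
by rewrite /= mxE evalCP.
Qed.

Lemma ivt2 (p : {poly R}) a b : a <= b -> p.[a] * p.[b] <= 0 -> exists x, a <= x <= b /\ root p x.
Proof.
move=> ab hp.
case: (ltgtP p.[a] 0) => ha.
- have hb : 0 <= p.[b] by rewrite -(nmulr_rle0 _ ha).
  have [x hx rx] := @poly_ivt R p a b ab (introT andP (conj (ltW ha) hb)).
  by exists x.
- have hb : p.[b] <= 0 by rewrite -(pmulr_rle0 _ ha).
  have [x hx rx] : exists2 x, a <= x <= b & root (- p) x.
    apply: (@poly_ivt R (- p) a b ab).
    by rewrite !hornerN oppr_le0 oppr_ge0 (ltW ha) hb.
  exists x; split => //; move: rx; rewrite /root hornerN oppr_eq0 //.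
- by exists a; rewrite lexx ab /root ha.
Qed.

End PF.


Section Step.
Variable R : realType.
Variables (k : nat) (B' : 'M[R]_k.+1) (u x' : 'cV[R]_k.+1) (v : 'I_k.+1 -> R) (bet r' : R).
Hypotheses (B'0 : forall i j, 0 <= B' i j) (upos : forall i, 0 < u i 0)
  (vpos : forall i, 0 < v i) (xpos : forall i, 0 < x' i 0) (Bx : B' *m x' = r' *: x').

Lemma sum_ge_term (T : finType) (F : T -> R) j : (forall i, 0 <= F i) -> F j <= \sum_i F i.
Proof. by move=> h; rewrite (bigD1 j) //= lerDl sumr_ge0. Qed.

Let Mmul t (y : 'cV[R]_k.+1) i : ((t%:M - B') *m y) i 0 = t * y i 0 - (B' *m y) i 0.
Proof. by rewrite mulmxBl mul_scalar_mx !mxE. Qed.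

Let subE (A B : 'cV[R]_k.+1) j : (A - B) j 0 = A j 0 - B j 0.
Proof. by rewrite !mxE. Qed.
Let sclE (d : R) (A : 'cV[R]_k.+1) j : (d *: A) j 0 = d * A j 0.
Proof. by rewrite !mxE. Qed.

Let Bxi i : (B' *m x') i 0 = r' * x' i 0.
Proof. by rewrite Bx mxE. Qed.

Let mono' t (y : 'cV[R]_k.+1) : r' < t -> (forall i, 0 <= t * y i 0 - (B' *m y) i 0) ->
  forall i, 0 <= y i 0.
Proof.
move=> ht hy; apply: (mono_lem B'0 xpos) => // i.
by rewrite Bxi ltr_pM2r.
Qed.

Let detnz t : r' < t -> \det (t%:M - B') != 0.
Proof.
move=> ht; apply/negP; rewrite -det_tr => /det0P [w wnz ww].
have h0 : (t%:M - B') *m w^T = 0.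
  by apply: trmx_inj; rewrite trmx_mul trmxK ww trmx0.
have p1 : forall i, 0 <= (w^T) i 0.
  by apply: (mono' ht) => i; rewrite -Mmul h0 mxE.
have p2 : forall i, 0 <= (- w^T) i 0.
  apply: (mono' ht) => i; rewrite -Mmul mulmxN h0 oppr0 mxE //.
move/eqP: wnz; apply; apply/matrixP => i j.
have := p1 j; have := p2 j; rewrite !mxE ord1 => h1 h2; lra.
Qed.

Definition zt t := (\det (t%:M - B'))^-1 *: (\adj (t%:M - B') *m u).

Let zdef t : r' < t -> (t%:M - B') *m zt t = u.
Proof.
move=> ht; rewrite /zt -scalemxAr mulmxA mul_mx_adj mul_scalar_mx scalerA mulVf ?detnz //.
by rewrite scale1r.
Qed.

Let zeq t i : r' < t -> t * zt t i 0 - (B' *m zt t) i 0 = u i 0.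
Proof. by move=> ht; rewrite -Mmul zdef. Qed.

Let bnd (c : R) t : r' < t -> (forall i, 0 <= u i 0 - c * x' i 0) ->
  forall i, c / (t - r') * x' i 0 <= zt t i 0.
Proof.
move=> ht hc i.
set d := c / (t - r').
have hd : d * (t - r') = c by rewrite /d divfK // subr_eq0 gt_eqF.
have := mono' ht (y := zt t - d *: x') => h.
have : 0 <= (zt t - d *: x') i 0.
  apply: h => j; rewrite mulmxBr -[B' *m (d *: x')]scalemxAr Bx !subE !(sclE d) (sclE r').
  have e : t * (zt t j 0 - d * x' j 0) - ((B' *m zt t) j 0 - d * (r' * x' j 0))
     = (t * zt t j 0 - (B' *m zt t) j 0) - (d * (t - r')) * x' j 0 by ring.
  by rewrite e zeq // hd; apply: hc.
rewrite subE (sclE d); lra.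
Qed.

Let bnd2 (C : R) t : r' < t -> (forall i, 0 <= C * x' i 0 - u i 0) ->
  forall i, zt t i 0 <= C / (t - r') * x' i 0.
Proof.
move=> ht hc i.
set d := C / (t - r').
have hd : d * (t - r') = C by rewrite /d divfK // subr_eq0 gt_eqF.
have := mono' ht (y := d *: x' - zt t) => h.
have : 0 <= (d *: x' - zt t) i 0.
  apply: h => j; rewrite mulmxBr -[B' *m (d *: x')]scalemxAr Bx !subE !(sclE d) (sclE r').
  have e : t * (d * x' j 0 - zt t j 0) - (d * (r' * x' j 0) - (B' *m zt t) j 0)
     = (d * (t - r')) * x' j 0 - (t * zt t j 0 - (B' *m zt t) j 0) by ring.
  by rewrite e zeq // hd; apply: hc.
rewrite subE (sclE d); lra.
Qed.


Lemma step_exists : exists rho (z : 'cV[R]_k.+1), (forall i, 0 < z i 0) /\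
  (forall i, rho * z i 0 - (B' *m z) i 0 = u i 0) /\ \sum_i v i * z i 0 = rho - bet.
Proof.
pose C := \sum_i u i 0 / x' i 0.
pose Sx := \sum_i x' i 0 / u i 0.
pose c := Sx^-1.
have Sxpos : 0 < Sx.
  have := @sum_ge_term _ (fun i => x' i 0 / u i 0) ord0 (fun j => divr_ge0 (ltW (xpos j)) (ltW (upos j))).
  have := divr_gt0 (xpos ord0) (upos ord0). rewrite /Sx /=. lra.
have cpos : 0 < c by rewrite invr_gt0.
have Cge : 0 <= C by apply: sumr_ge0 => i _; rewrite divr_ge0 // ltW.
have hC : forall i, 0 <= C * x' i 0 - u i 0.
  move=> i; have := @sum_ge_term _ (fun i => u i 0 / x' i 0) i.
  move=> /(_ (fun j => divr_ge0 (ltW (upos j)) (ltW (xpos j)))).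
  rewrite ler_pdivrMr // -/C => h; lra.
have hc : forall i, 0 <= u i 0 - c * x' i 0.
  move=> i; have := @sum_ge_term _ (fun i => x' i 0 / u i 0) i.
  move=> /(_ (fun j => divr_ge0 (ltW (xpos j)) (ltW (upos j)))).
  rewrite ler_pdivrMr // -/Sx => h.
  have : c * x' i 0 <= c * (Sx * u i 0) by rewrite ler_pM2l.
  rewrite mulrA mulVf ?gt_eqF // mul1r => h2; lra.
pose V := \sum_i v i * x' i 0.
have Vpos : 0 < V.
  have := @sum_ge_term _ (fun i => v i * x' i 0) ord0 (fun j => mulr_ge0 (ltW (vpos j)) (ltW (xpos j))).
  have := mulr_gt0 (vpos ord0) (xpos ord0). rewrite /V /=. lra.
pose S t := \sum_i v i * zt t i 0.
have Slow : forall t, r' < t -> c * V / (t - r') <= S t.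
  move=> t ht.
  have -> : c * V / (t - r') = \sum_i v i * (c / (t - r') * x' i 0).
    rewrite /V mulrAC mulr_sumr; apply: eq_bigr => i _; ring.
  apply: ler_sum => i _; apply: ler_wpM2l; [exact: ltW | exact: (@bnd c t ht hc i)].
have Sup : forall t, r' < t -> S t <= C * V / (t - r').
  move=> t ht.
  have -> : C * V / (t - r') = \sum_i v i * (C / (t - r') * x' i 0).
    rewrite /V mulrAC mulr_sumr; apply: eq_bigr => i _; ring.
  apply: ler_sum => i _; apply: ler_wpM2l; [exact: ltW | exact: (@bnd2 C t ht hC i)].
pose K := c * V. pose K2 := C * V.
have Kpos : 0 < K by rewrite mulr_gt0.
have K2ge : 0 <= K2 by rewrite mulr_ge0 // ltW.
pose D := `|r' - bet| + K + 1.
have Dpos : K + 1 <= D by rewrite /D; have := normr_ge0 (r' - bet); lra.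
pose del := K / D.
have delpos : 0 < del by rewrite divr_gt0 //; lra.
have del1 : del < 1 by rewrite ltr_pdivrMr; lra.
pose t0 := r' + del.
pose T := r' + 1 + `|bet - r'| + K2.
have ht0 : r' < t0 by rewrite /t0; lra.
have hT : r' < T by rewrite /T; have := normr_ge0 (bet - r'); lra.
have t0T : t0 <= T by rewrite /t0 /T; have := normr_ge0 (bet - r'); lra.
pose sig t := t - bet - S t.
have sig0 : sig t0 < 0.
  have h := Slow _ ht0.
  have e : c * V / (t0 - r') = D.
    rewrite /t0 /del -/K. have -> : r' + K / D - r' = K / D by ring.
    by rewrite invf_div mulrC divfK // gt_eqF.
  rewrite e in h; rewrite /sig /t0.
  have := ler_norm (r' - bet). rewrite /D in h. lra.
have sigT : 0 < sig T.
  have h := Sup _ hT.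
  have h2 : C * V / (T - r') <= K2.
    rewrite ler_pdivrMr ?subr_gt0 // -/K2.
    have : 1 <= T - r' by rewrite /T; have := normr_ge0 (bet - r'); lra.
    nra.
  have := ler_norm (bet - r'). rewrite /sig /T. rewrite /T in h h2. lra.
pose dp := \det (char_poly_mx B').
pose pp := ('X - bet%:P) * dp -
  \sum_i \sum_j (v i * u j 0)%:P * (\adj (char_poly_mx B')) i j.
have ppE : forall t, r' < t -> pp.[t] = dp.[t] * sig t.
  move=> t ht.
  have eS : \det (t%:M - B') * S t =
      \sum_i \sum_j v i * u j 0 * (\adj (t%:M - B')) i j.
    rewrite /S mulr_sumr; apply: eq_bigr => i _.
    have mulE (A : 'M[R]_k.+1) (y : 'cV[R]_k.+1) : (A *m y) i 0 = \sum_j A i j * y j 0.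
      by rewrite mxE.
    rewrite /zt (sclE _ _ i) mulE.
    rewrite mulrCA (mulVKf (detnz ht)) mulr_sumr.
    by apply: eq_bigr => j _; ring.
  rewrite /pp /sig /dp hornerD hornerN hornerM hornerD hornerN hornerX hornerC det_eval.
  rewrite horner_sum.
  under eq_bigr => i _ do rewrite horner_sum.
  under eq_bigr => i _ do under eq_bigr => j _ do rewrite hornerM hornerC adj_eval.
  rewrite -eS; ring.
have dsg : 0 < dp.[t0] * dp.[T].
  rewrite ltNge; apply/negP => h.
  have [x [/andP [hx1 hx2] rx]] := ivt2 t0T h.
  move: rx; rewrite /root /dp det_eval.
  by rewrite (negbTE (detnz (lt_le_trans ht0 hx1))).
have psg : pp.[t0] * pp.[T] <= 0.
  rewrite (ppE _ ht0) (ppE _ hT).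
  have e : dp.[t0] * sig t0 * (dp.[T] * sig T) = (dp.[t0] * dp.[T]) * (sig t0 * sig T) by ring.
  rewrite e; apply: ltW; rewrite pmulr_rlt0 // nmulr_rlt0 //.
have [rho [/andP [hr1 hr2] rr]] := ivt2 t0T psg.
have hrho : r' < rho by apply: lt_le_trans hr1.
have sigr : sig rho = 0.
  move: rr; rewrite /root (ppE _ hrho) mulf_eq0 => /orP [|/eqP //].
  by rewrite /dp det_eval (negbTE (detnz hrho)).
exists rho, (zt rho); split; [|split].
- move=> i; apply: lt_le_trans (bnd hrho hc i).
  by rewrite mulr_gt0 // divr_gt0 // subr_gt0.
- by move=> i; apply: zeq.
- by move: sigr; rewrite /sig -/(S rho); lra.
Qed.
End Step.


Section PFpos.
Variable R : realType.

Lemma ord_split m (i : 'I_m.+2) :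
  i = ord_max \/ exists j : 'I_m.+1, i = widen_ord (leqnSn m.+1) j.
Proof.
case: (ltnP i m.+1) => h.
- by right; exists (Ordinal h); apply: val_inj.
- left; apply: val_inj => /=; have := ltn_ord i; lia.
Qed.

Lemma PFpos m (B : 'M[R]_m.+1) : (forall i j, 0 < B i j) ->
  exists r (x : 'cV[R]_m.+1), (forall i, 0 < x i 0) /\ B *m x = r *: x.
Proof.
elim: m B => [|m IH] B Bpos.
  exists (B 0 0), (const_mx 1); split => [i|]; first by rewrite mxE.
  apply/matrixP => i j; rewrite !mxE big_ord1 !mxE !ord1; ring.
pose w := widen_ord (leqnSn m.+1).
pose B' := \matrix_(i, j) B (w i) (w j).
have [r' [x' [xpos Bx]]] := IH B' (fun i j => ltac:(by rewrite mxE)).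
pose u : 'cV[R]_m.+1 := \col_i B (w i) ord_max.
pose v := fun j => B ord_max (w j).
pose bet := B ord_max ord_max.
have [rho [z [zpos [zeq zs]]]] := @step_exists R m B' u x' v bet r'
   (fun i j => ltac:(by rewrite mxE ltW)) (fun i => ltac:(by rewrite mxE)) (fun i => Bpos _ _) xpos Bx.
pose x : 'cV[R]_m.+2 := \col_i (if (i < m.+1)%N then z (inord i) 0 else 1).
have xw : forall j, x (w j) 0 = z j 0.
  by move=> j; rewrite mxE /= ltn_ord; congr (z _ 0); apply: val_inj; rewrite /= inordK.
have xm : x ord_max 0 = 1 by rewrite mxE /= ltnn.
exists rho, x; split.
  by move=> i; case: (ord_split i) => [->|[j ->]]; rewrite ?xm ?xw.
apply/matrixP => i j0; rewrite !ord1 [LHS]mxE [RHS]mxE big_ord_recr /=.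
case: (ord_split i) => [->|[i' ->]].
- rewrite xm -/w.
  under eq_bigr => j _ do rewrite xw.
  move: zs; rewrite /v /bet /= => h; lra.
- rewrite xm xw -/w.
  under eq_bigr => j _ do rewrite xw.
  have := zeq i'; rewrite mxE.
  have -> : \sum_j B' i' j * z j 0 = \sum_j B (w i') (w j) * z j 0.
    by apply: eq_bigr => j _; rewrite mxE.
  rewrite mxE => h; lra.
Qed.
End PFpos.

Section PFirr.
Variable R : realType.

Lemma PFirr m (A : 'M[R]_m.+1) N : (forall i j, 0 <= A i j) ->
  (forall i j, 0 < ((1 + A) ^+ N) i j) ->
  exists c (x : 'cV[R]_m.+1), (forall i, 0 < x i 0) /\ A *m x = c *: x.
Proof.
move=> A0 Ppos.
pose P := (1 + A) ^+ N.
have [rho [x [xpos Px]]] := PFpos Ppos.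
pose y := A *m x.
have comAP : A * P = P * A.
  apply: commrX; exact: (commrD (commr1 A) (commr_refl A)).
have Py : P *m y = rho *: y.
  rewrite /y mulmxA !mulmxE -comAP -mulmxE -mulmxA Px.
  by rewrite -scalemxAr.
have ynn : forall i, 0 <= y i 0.
  by move=> i; rewrite mxE sumr_ge0 // => j _; rewrite mulr_ge0 // ltW.
have [k Hk] := fin_argmax (fun i => y i 0 / x i 0) ord0.
pose tau := y k 0 / x k 0.
pose wv := tau *: x - y.
have wE : forall i, wv i 0 = tau * x i 0 - y i 0 by move=> i; rewrite !mxE.
have wnn : forall i, 0 <= wv i 0.
  move=> i; rewrite wE; have := Hk i; rewrite -/tau ler_pdivrMr // => h; lra.
have wk : wv k 0 = 0 by rewrite wE /tau divfK ?gt_eqF //; ring.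
have Pw : P *m wv = rho *: wv.
  by rewrite mulmxBr -scalemxAr Px Py scalerA mulrC -scalerA scalerBr.
have w0 : forall j, wv j 0 = 0.
  move=> j; apply/eqP; rewrite eq_le wnn andbT leNgt; apply/negP => wj.
  have : (P *m wv) k 0 = 0 by rewrite Pw mxE wk mulr0.
  rewrite mxE => h.
  have : P k j * wv j 0 <= \sum_l P k l * wv l 0.
    by apply: (@sum_ge_term R _ (fun l => P k l * wv l 0)) => l; rewrite mulr_ge0 // ltW.
  rewrite h; have := mulr_gt0 (Ppos k j) wj; lra.
exists tau, x; split => //.
apply/matrixP => i j; rewrite !ord1 [RHS]mxE -/y; have := w0 i; rewrite wE; lra.
Qed.

Lemma pow_pos m (A : 'M[R]_m.+1) (e : rel 'I_m.+1) :
  (forall i j, A i j = (e i j)%:R) -> (forall i j, connect e i j) ->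
  exists N, forall i j, 0 < ((1 + A) ^+ N) i j.
Proof.
move=> AE conn.
pose M := (1 : 'M[R]_m.+1) + A.
have Mnn : forall i j, 0 <= M i j.
  by move=> i j; rewrite !mxE AE addr_ge0.
have MA : forall i j, A i j <= M i j.
  by move=> i j; rewrite [M i j]mxE lerDr mxE.
have Pnn : forall k i j, 0 <= (M ^+ k) i j.
  elim=> [|k IH] i j; first by rewrite expr0 mxE.
  rewrite exprS -mulmxE mxE; apply: sumr_ge0 => l _; exact: mulr_ge0.
have Pmono : forall k i j, (M ^+ k) i j <= (M ^+ k.+1) i j.
  move=> k i j; rewrite exprS /M mulrDl mul1r [X in _ <= X]mxE lerDl.
  rewrite -mulmxE mxE; apply: sumr_ge0 => l _; apply: mulr_ge0; [by rewrite AE ler0n | exact: Pnn].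
have Ple : forall k k' i j, (k <= k')%N -> (M ^+ k) i j <= (M ^+ k') i j.
  move=> k k' i j hk; rewrite -(subnK hk); elim: (k' - k)%N => [|d IH] //.
  by rewrite addSn; exact: le_trans IH (Pmono _ _ _).
have Ppath : forall p i, path e i p -> 0 < (M ^+ (size p)) i (last i p).
  elim=> [|z p IH] i /=; first by rewrite expr0 mxE eqxx.
  case/andP => eiz pz.
  rewrite exprS -mulmxE mxE.
  have h := @sum_ge_term R _ (fun l => M i l * (M ^+ size p) l (last z p)) z
     (fun l => mulr_ge0 (Mnn _ _) (Pnn _ _ _)).
  have h2 : 0 < M i z * (M ^+ size p) z (last z p).
    rewrite mulr_gt0 ?IH //; have := MA i z; rewrite AE eiz => h3.
    exact: lt_le_trans (ltr01 : (0 : R) < 1) h3.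
  exact: lt_le_trans h2 h.
have exk : forall ij : 'I_m.+1 * 'I_m.+1, exists k, 0 < (M ^+ k) ij.1 ij.2.
  move=> [i j]; have /connectP [p pp ->] := conn i j.
  by exists (size p); apply: Ppath.
have : forall s : seq ('I_m.+1 * 'I_m.+1), exists N, forall ij, ij \in s -> 0 < (M ^+ N) ij.1 ij.2.
  elim=> [|ij s [N HN]]; first by exists 0%N.
  have [k hk] := exk ij.
  exists (maxn N k) => ij'; rewrite inE => /orP [/eqP ->|h].
    by apply: lt_le_trans hk (Ple _ _ _ _ (leq_maxr _ _)).
  by apply: lt_le_trans (HN _ h) (Ple _ _ _ _ (leq_maxl _ _)).
move=> /(_ (enum {: 'I_m.+1 * 'I_m.+1})) [N HN].
by exists N => i j; apply: (HN (i, j)); rewrite mem_enum.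
Qed.
End PFirr.

Section Graph.
Variable R : realType.

Lemma PFgraph_aux n (e : rel 'I_n) (S : {set 'I_n}) m (h : 'I_m.+1 -> 'I_n) (hinv : 'I_n -> 'I_m.+1) :
  (forall i, h i \in S) -> (forall x, x \in S -> h (hinv x) = x) -> injective h ->
  (forall i j, i \in S -> j \in S -> connect [rel x y | e x y && (x \in S) && (y \in S)] i j) ->
  exists r (x : 'I_n -> R), [/\ forall i, i \in S -> 0 < x i, forall i, i \notin S -> x i = 0
    & forall i, i \in S -> \sum_j (e i j)%:R * x j = r * x i].
Proof.
move=> hS hK hinj conn.
have hinvK : forall l, hinv (h l) = l by move=> l; apply: hinj; rewrite hK.
pose A : 'M[R]_m.+1 := \matrix_(i, j) (e (h i) (h j))%:R.
pose e' := [rel i j : 'I_m.+1 | e (h i) (h j)].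
have conn' : forall a b, connect e' a b.
  move=> a b; have /connectP [p pp lp] := conn _ _ (hS a) (hS b).
  have : forall p x, x \in S -> path [rel x y | e x y && (x \in S) && (y \in S)] x p ->
      connect e' (hinv x) (hinv (last x p)).
    elim=> [|y q IH] x xS /=; first by rewrite connect0.
    case/andP => /andP [/andP [exy _] yS] pq.
    apply: connect_trans (IH _ yS pq); apply: connect1; by rewrite /= !hK.
  by move=> /(_ p (h a) (hS a) pp); rewrite -lp !hinvK.
have [N HN] := @pow_pos R m A e' (fun i j => ltac:(by rewrite mxE)) conn'.
have [c [xv [xpos Ax]]] := @PFirr R m A N (fun i j => ltac:(by rewrite mxE ler0n)) HN.
exists c, (fun i => if i \in S then xv (hinv i) 0 else 0); split.
- by move=> i ->.
- by move=> i /negbTE ->.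
move=> i iS; rewrite iS.
rewrite (bigID (fun j => j \in S)) /= [X in _ + X]big1 ?addr0; last first.
  by move=> j /negbTE ->; rewrite mulr0.
rewrite (reindex_onto h hinv) /=; last by move=> j jS; rewrite hK.
have -> : \sum_(j | (h j \in S) && (hinv (h j) == j)) (e i (h j))%:R * (if h j \in S then xv (hinv (h j)) 0 else 0)
   = \sum_j A (hinv i) j * xv j 0.
  apply: eq_big => [j|j _]; first by rewrite hS hinvK eqxx.
  by rewrite hS hinvK mxE hK.
have := congr1 (fun M : 'cV[R]_m.+1 => M (hinv i) 0) Ax; rewrite /= !mxE => ->.
by [].
Qed.

Lemma PFgraph n (e : rel 'I_n) (S : {set 'I_n}) : S != set0 ->
  (forall i j, i \in S -> j \in S -> connect [rel x y | e x y && (x \in S) && (y \in S)] i j) ->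
  exists r (x : 'I_n -> R), [/\ forall i, i \in S -> 0 < x i, forall i, i \notin S -> x i = 0
    & forall i, i \in S -> \sum_j (e i j)%:R * x j = r * x i].
Proof.
case/set0Pn => i0 Hi0 conn.
have : (0 < #|S|)%N by apply/card_gt0P; exists i0.
case Hm : #|S| => [//|m] _.
pose h := fun i : 'I_m.+1 => enum_val (cast_ord (esym Hm) i).
pose hinv := fun x => cast_ord Hm (enum_rank_in Hi0 x).
apply: (@PFgraph_aux n e S m h hinv) => //.
- by move=> i; rewrite /h enum_valP.
- by move=> x xS; rewrite /h /hinv cast_ordK enum_rankK_in.
- by move=> a b; rewrite /h => /enum_val_inj /cast_ord_inj.
Qed.
End Graph.

Section CE.
Variable R : realType.

Lemma sum_lt (T : finType) (F G : T -> R) i0 : (forall i, F i <= G i) -> F i0 < G i0 ->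
  \sum_i F i < \sum_i G i.
Proof.
move=> hle hlt; rewrite (bigD1 i0) //= [X in _ < X](bigD1 i0) //=.
by apply: ltr_leD => //; apply: ler_sum => i _.
Qed.

Lemma CE_of_pair n (E : rel 'I_n) (S : {set 'I_n}) r (x : 'I_n -> R) :
  S != set0 -> (forall i, i \in S -> 0 < x i) -> (forall i, i \notin S -> x i = 0) ->
  (forall i, i \in S -> \sum_j (E i j)%:R * x j = r * x i) ->
  compl_eigenvalue (adjmx R E) r.
Proof.
case/set0Pn => i0 Hi0 xpos xz xeq.
have xnn : forall i, 0 <= x i.
  by move=> i; case: (boolP (i \in S)) => h; [exact: ltW (xpos _ h) | rewrite xz].
have ent : forall i, (adjmx R E *m \col_j x j - r *: \col_j x j) i 0 =
    \sum_j (E i j)%:R * x j - r * x i.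
  move=> i; rewrite !mxE; congr (_ - _); apply: eq_bigr => j _; rewrite !mxE //.
exists (\col_j x j); split.
- apply/eqP => /matrixP /(_ i0 0); rewrite !mxE; have := xpos _ Hi0; lra.
- by move=> i; rewrite mxE.
- move=> i; rewrite ent; case: (boolP (i \in S)) => h.
    by rewrite xeq // subrr.
  rewrite xz // mulr0 subr0; apply: sumr_ge0 => j _; rewrite mulr_ge0 // ler0n.
- apply: big1 => i _; rewrite ent mxE; case: (boolP (i \in S)) => h.
    by rewrite xeq // subrr mulr0.
  by rewrite xz // mul0r.
Qed.

Lemma cmp_lem n (E : rel 'I_n) (X Y : {set 'I_n}) s r (x y : 'I_n -> R) i0 j0 :
  (forall i, i \in X -> i \in Y) ->
  (forall i, i \in X -> 0 < x i) -> (forall i, i \notin X -> x i = 0) ->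
  (forall i, i \in X -> \sum_j (E i j)%:R * x j = s * x i) ->
  (forall i, i \in Y -> 0 < y i) -> (forall i, i \notin Y -> y i = 0) ->
  (forall i, i \in Y -> \sum_j (E j i)%:R * y j = r * y i) ->
  i0 \in Y -> i0 \notin X -> j0 \in X -> E i0 j0 -> s < r.
Proof.
move=> XY xpos xz xeq ypos yz yeq i0Y i0X j0X e0.
have xnn : forall i, 0 <= x i.
  by move=> i; case: (boolP (i \in X)) => h; [exact: ltW (xpos _ h) | rewrite xz].
have ynn : forall i, 0 <= y i.
  by move=> i; case: (boolP (i \in Y)) => h; [exact: ltW (ypos _ h) | rewrite yz].
pose Q := \sum_i y i * \sum_j (E i j)%:R * x j.
pose P := \sum_i x i * y i.
have QE : Q = r * P.
  rewrite /Q /P.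
  have -> : \sum_i y i * \sum_j (E i j)%:R * x j = \sum_j x j * \sum_i (E i j)%:R * y i.
    under eq_bigr => i _ do rewrite mulr_sumr.
    rewrite exchange_big /=; apply: eq_bigr => j _; rewrite mulr_sumr.
    by apply: eq_bigr => i _; ring.
  rewrite mulr_sumr; apply: eq_bigr => j _.
  case: (boolP (j \in X)) => h.
    by rewrite yeq ?XY //; ring.
  by rewrite xz // !mul0r mulr0.
have Ppos : 0 < P.
  rewrite /P (bigD1 j0) //=; apply: ltr_pwDl.
    by rewrite mulr_gt0 ?xpos ?ypos ?XY.
  by apply: sumr_ge0 => i _; rewrite mulr_ge0.
have QP : s * P < Q.
  rewrite /P /Q mulr_sumr; apply: (@sum_lt _ _ _ i0).
    move=> i; case: (boolP (i \in X)) => h.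
      by rewrite xeq // (_ : y i * (s * x i) = s * (x i * y i)) ?lexx //; ring.
    by rewrite xz // mul0r mulr0 mulr_ge0 // sumr_ge0 // => j _; rewrite mulr_ge0 ?ler0n.
  rewrite xz // mul0r mulr0 mulr_gt0 ?ypos //.
  have h := @sum_ge_term R _ (fun j => (E i0 j)%:R * x j) j0
     (fun j => mulr_ge0 (ler0n _ _) (xnn j)).
  by apply: lt_le_trans h; rewrite e0 mul1r xpos.
rewrite QE in QP; rewrite -(ltr_pM2r Ppos); lra.
Qed.
End CE.

Section Final.
Variable R : realType.

Lemma eq_lem n (E : rel 'I_n) (S : {set 'I_n}) r q (x y : 'I_n -> R) :
  S != set0 ->
  (forall i, i \in S -> 0 < x i) -> (forall i, i \notin S -> x i = 0) ->
  (forall i, i \in S -> \sum_j (E i j)%:R * x j = r * x i) ->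
  (forall i, i \in S -> 0 < y i) -> (forall i, i \notin S -> y i = 0) ->
  (forall i, i \in S -> \sum_j (E j i)%:R * y j = q * y i) -> r = q.
Proof.
case/set0Pn => j0 j0S xpos xz xeq ypos yz yeq.
have xnn : forall i, 0 <= x i.
  by move=> i; case: (boolP (i \in S)) => h; [exact: ltW (xpos _ h) | rewrite xz].
have ynn : forall i, 0 <= y i.
  by move=> i; case: (boolP (i \in S)) => h; [exact: ltW (ypos _ h) | rewrite yz].
pose P := \sum_i x i * y i.
have Ppos : 0 < P.
  rewrite /P (bigD1 j0) //=; apply: ltr_pwDl.
    by rewrite mulr_gt0 ?xpos ?ypos.
  by apply: sumr_ge0 => i _; rewrite mulr_ge0.
have e1 : \sum_i y i * \sum_j (E i j)%:R * x j = r * P.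
  rewrite /P mulr_sumr; apply: eq_bigr => i _.
  case: (boolP (i \in S)) => h; first by rewrite xeq //; ring.
  by rewrite yz // xz // !mul0r mulr0.
have e2 : \sum_i y i * \sum_j (E i j)%:R * x j = q * P.
  have -> : \sum_i y i * \sum_j (E i j)%:R * x j = \sum_j x j * \sum_i (E i j)%:R * y i.
    under eq_bigr => i _ do rewrite mulr_sumr.
    rewrite exchange_big /=; apply: eq_bigr => j _; rewrite mulr_sumr.
    by apply: eq_bigr => i _; ring.
  rewrite /P mulr_sumr; apply: eq_bigr => j _.
  case: (boolP (j \in S)) => h; first by rewrite yeq //; ring.
  by rewrite xz // !mul0r mulr0.
apply: (mulIf (x := P)); first by rewrite gt_eqF.
by rewrite -e1 -e2.
Qed.

Lemma cross n (E : rel 'I_n) (S : {set 'I_n}) p u :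
  u \notin S -> path E u p -> last u p \in S -> exists i j, [/\ i \notin S, j \in S & E i j].
Proof.
elim: p u => [|z p IH] u uS /=; first by rewrite (negbTE uS).
case/andP => euz pz lz.
case: (boolP (z \in S)) => zS; first by exists u, z.
exact: IH pz lz.
Qed.

Lemma conn_rev n (E : rel 'I_n) (S : {set 'I_n}) :
  (forall i j, i \in S -> j \in S -> connect [rel x y | E x y && (x \in S) && (y \in S)] i j) ->
  (forall i j, i \in S -> j \in S ->
     connect [rel x y | [rel x y | E y x] x y && (x \in S) && (y \in S)] i j).
Proof.
move=> h i j iS jS.
have -> : connect [rel x y | [rel x y | E y x] x y && (x \in S) && (y \in S)] i j =
   connect [rel x y | [rel x y | E x y && (x \in S) && (y \in S)] y x] i j.
  by apply: eq_connect => x y /=; rewrite andbAC.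
by rewrite connect_rev /=; apply: h.
Qed.

End Final.

Local Close Scope ring_scope.

Theorem mainTheorem6 (R : realType) (n : nat) (E : rel 'I_n) (a b c : nat) :
  irreflexive E ->
  strongly_connected E ->
  exactly_three_CE (adjmx R E) ->
  a <= b -> 0 < b ->
  contains_theta E a b c ->
  n = a + b + c + 2.
Proof.
move=> irr sc [l1 [l2 [l3 [d12 d13 d23 H3]]]] ab b0 [f [finj farc]].
have hN : a + b + c + 2 <= n by have := leq_card f finj; rewrite !card_ord.
case: (ltngtP (a + b + c + 2) n) => // hlt; last by move: hN; rewrite leqNgt hlt.
exfalso.
pose S1 := SK f (K1 a b).
pose S2 := SK f predT.
pose S3 := [set: 'I_n].
pose g1 := g f 1.
have g1S1 : g1 \in S1 := gSK f (lt1N a b c) (K1_1 a b).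
have g1S2 : g1 \in S2 := gSK f (lt1N a b c) isT.
have conn1 := @strong_SK n a b c E f farc (K1 a b) (K1_0 a b) (K1_1 a b)
  (@K1_p1 a b) (@K1_p3 a b c) (@cov1 a b c).
have conn2 := @strong_SK n a b c E f farc predT isT isT (fun _ _ => isT) (fun _ _ => isT) (@cov2 a b c).
have conn3 : forall i j, i \in S3 -> j \in S3 -> connect (relS E S3) i j.
  move=> i j _ _; rewrite (eq_connect (e' := E)) ?sc // => x y; by rewrite /= !in_setT !andbT.
have ne1 : S1 != set0 by apply/set0Pn; exists g1.
have ne2 : S2 != set0 by apply/set0Pn; exists g1.
have ne3 : S3 != set0 by apply/set0Pn; exists g1; rewrite in_setT.
have [r1 [x1 [x1p x1z x1e]]] := @PFgraph R n E S1 ne1 conn1.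
have [r2 [x2 [x2p x2z x2e]]] := @PFgraph R n E S2 ne2 conn2.
have [r3 [x3 [x3p x3z x3e]]] := @PFgraph R n E S3 ne3 conn3.
have [q1 [y1 [y1p y1z y1e]]] := @PFgraph R n [rel x y | E y x] S1 ne1 (conn_rev conn1).
have [q2 [y2 [y2p y2z y2e]]] := @PFgraph R n [rel x y | E y x] S2 ne2 (conn_rev conn2).
have [q3 [y3 [y3p y3z y3e]]] := @PFgraph R n [rel x y | E y x] S3 ne3 (conn_rev conn3).
have eq1 := eq_lem ne1 x1p x1z x1e y1p y1z y1e.
have eq2 := eq_lem ne2 x2p x2z x2e y2p y2z y2e.
have eq3 := eq_lem ne3 x3p x3z x3e y3p y3z y3e.
pose S0 := [set g1].
pose x0 := fun i : 'I_n => ((i == g1)%:R)%R : R.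
have ne0 : S0 != set0 by apply/set0Pn; exists g1; rewrite inE.
have x0p : forall i, i \in S0 -> ((0 : R) < x0 i)%R by move=> i; rewrite inE /x0 => ->; rewrite ltr01.
have x0z : forall i, i \notin S0 -> x0 i = 0%R by move=> i; rewrite inE /x0 => /negbTE ->.
have x0e : forall i, i \in S0 -> (\sum_j (E i j)%:R * x0 j = 0 * x0 i)%R.
  move=> i; rewrite inE => /eqP ->; rewrite mul0r (bigD1 g1) //= big1 ?addr0.
    by rewrite irr mul0r.
  by move=> j /negbTE hj; rewrite /x0 hj mulr0.
have [pN pK p1' parc] := pfacts a b c.
set p := last 0 (iota (a + b + 2) c) in pN pK p1' parc.
have arc1 : E (g f p) g1 := arc farc parc pN (lt1N a b c).
have S01 : forall i, i \in S0 -> i \in S1 by move=> i; rewrite inE => /eqP ->.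
have gpS1 : g f p \in S1 := gSK f pN pK.
have gpS0 : g f p \notin S0.
  rewrite inE; apply/eqP => hg.
  by move/eqP: p1'; apply; apply: (g_inj finj pN (lt1N a b c) hg).
have g1S0 : g1 \in S0 by rewrite inE.
have c01 : ((0 : R) < q1)%R :=
  @cmp_lem R n E S0 S1 0 q1 x0 y1 (g f p) g1 S01 x0p x0z x0e y1p y1z y1e gpS1 gpS0 g1S0 arc1.
have [qN qK qarc] := @qfacts a b c b0.
set q := last 1 (iota (a + 2) b) in qN qK qarc.
have arc2 : E (g f q) (g f 0) := arc farc qarc qN (lt0N a b c).
have S12 : forall i, i \in S1 -> i \in S2.
  by move=> i /SK_inv [k [Kk -> hk]]; apply: gSK.
have gqS2 : g f q \in S2 := gSK f qN isT.
have gqS1 : g f q \notin S1.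
  apply/negP => /SK_inv [k [Kk hq hk]].
  have h := g_inj finj qN hk hq.
  by move: qK; rewrite h Kk.
have g0S1 : g f 0 \in S1 := gSK f (lt0N a b c) (K1_0 a b).
have c12 : (r1 < q2)%R :=
  @cmp_lem R n E S1 S2 r1 q2 x1 y2 (g f q) (g f 0) S12 x1p x1z x1e y2p y2z y2e gqS2 gqS1 g0S1 arc2.
have [u uS] : exists u, u \notin S2.
  case: (boolP [exists u, u \notin S2]) => [/existsP [u hu]|/existsPn h]; first by exists u.
  exfalso.
  have e1 : #|S2| = n.
    rewrite -[RHS](card_ord n); apply: eq_card => k; have := h k; rewrite negbK => ->.
    by [].
  have e2 : #|S2| = a + b + c + 2.
    rewrite /S2 /SK card_imset // -[RHS](card_ord (a + b + c + 2)).
    by apply: eq_card => k; rewrite inE.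
  by move: hlt; rewrite -e1 e2 ltnn.
have /connectP [pp hp hl] := sc u (g f 0).
have g0S2 : last u pp \in S2 by rewrite -hl; exact: (gSK f (lt0N a b c) isT).
have [i0 [j0 [i0S j0S e0]]] := cross uS hp g0S2.
have S23 : forall i, i \in S2 -> i \in S3 by move=> i _; rewrite in_setT.
have c23 : (r2 < q3)%R :=
  @cmp_lem R n E S2 S3 r2 q3 x2 y3 i0 j0 S23 x2p x2z x2e y3p y3z y3e (in_setT i0) i0S j0S e0.
have ce0 := CE_of_pair ne0 x0p x0z x0e.
have ce1 := CE_of_pair ne1 x1p x1z x1e.
have ce2 := CE_of_pair ne2 x2p x2z x2e.
have ce3 := CE_of_pair ne3 x3p x3z x3e.
rewrite -eq1 in c01; rewrite -eq2 in c12; rewrite -eq3 in c23.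
exact: (four_in_three c01 c12 c23 (proj1 (H3 _) ce0) (proj1 (H3 _) ce1)
  (proj1 (H3 _) ce2) (proj1 (H3 _) ce3)).
Qed.
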